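(* Let $0<\varepsilon\le1$, $\gamma>1$, $\Delta t>0$. Consider the first order semi-implicit (IMEX) time discretization of the Euler equations $U^{n+1}=U^n-\Delta t\,\nabla\cdot\hat F(U^n)-\Delta t\,\nabla\cdot\tilde F(U^{n+1})$, written as the explicit non-stiff step $$\widehat\rho=\rho^n-\Delta t\,\nabla\cdot(\rho\mathbf u)^n,\quad \widehat{\rho\mathbf u}=(\rho\mathbf u)^n-\Delta t\,\nabla\cdot(\rho\mathbf u\otimes\mathbf u+p\,\mathrm{Id})^n,\quad \widehat{\rho E}=(\rho E)^n-\Delta t\,\nabla\cdot\big((\rho E+\Pi)^n\mathbf u^n\big),$$ followed by the implicit stiff step $$\rho^{n+1}=\widehat\rho,\quad (\rho\mathbf u)^{n+1}=\widehat{\rho\mathbf u}-\frac{1-\varepsilon^2}{\varepsilon^2}\Delta t\,\nabla p^{n+1},\quad (\rho E)^{n+1}=\widehat{\rho E}-(1-\varepsilon^2)\Delta t\,\nabla\cdot\big((p-p_\infty)\mathbf u\big)^{n+1}.$$ Set $\widehat{\mathbf u}=\widehat{\rho\mathbf u}/\widehat\rho$ and $\widehat p=(\gamma-1)(\widehat{\rho E}-\frac{\varepsilon^2}{2}\widehat\rho\|\widehat{\mathbf u}\|^2)$. Then this scheme is equivalent to the explicit step above, the implicit mass and momentum updates above, and the nonlinear elliptic pressure equation $$-\frac{(1-\varepsilon^2)^2}{\varepsilon^2}\Delta t^2\,\nabla\cdot\Big(\frac{(p-p_\infty)^{n+1}}{\widehat\rho}\nabla p^{n+1}\Big)+\frac{p^{n+1}}{\gamma-1}=-\frac{(1-\varepsilon^2)^2}{2\varepsilon^2}\frac{\Delta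 t^2}{\widehat\rho}\|\nabla p^{n+1}\|^2-(1-\varepsilon^2)\Delta t\,(p-p_\infty)^{n+1}\nabla\cdot\widehat{\mathbf u}+\frac{\widehat p}{\gamma-1}.$$
   Context: Nondimensionalised Euler equations $U_t+\nabla\cdot F(U)=0$ in $\mathbb R^d$ with $U=(\rho,\rho\mathbf u,\rho E)$, $F(U)=(\rho\mathbf u,\rho\mathbf u\otimes\mathbf u+\frac{p}{\varepsilon^2}\mathrm{Id},(\rho E+p)\mathbf u)$, equation of state $p=(\gamma-1)(\rho E-\frac{\varepsilon^2}{2}\rho\|\mathbf u\|^2)$, reference Mach number $0<\varepsilon\le1$. Flux splitting $F=\hat F+\tilde F$ with $\hat F(U)=(\rho\mathbf u,\rho\mathbf u\otimes\mathbf u+p\,\mathrm{Id},(\rho E+\Pi)\mathbf u)$, $\tilde F(U)=(0,\frac{1-\varepsilon^2}{\varepsilon^2}p\,\mathrm{Id},(p-\Pi)\mathbf u)$, where $\Pi=\varepsilon^2p+(1-\varepsilon^2)p_\infty$ and the reference pressure is $p_\infty(t)=\inf_{\mathbf x}p(\mathbf x,t)$ (so $p-\Pi=(1-\varepsilon^2)(p-p_\infty)$). Superscripts $n$, $n+1$ denote time levels $t^n$, $t^{n+1}=t^n+\Delta t$. *)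

(* Defs.v *)
From HB Require Import structures.
From mathcomp Require Import all_boot all_order all_algebra.
From mathcomp Require Import all_classical all_reals all_analysis.
Set Implicit Arguments. Unset Strict Implicit. Unset Printing Implicit Defensive.
Import Order.TTheory GRing.Theory Num.Theory.
Import numFieldNormedType.Exports.
Local Open Scope ring_scope.
Local Open Scope classical_set_scope.

Section EulerDefs.
Variables (R : realType) (d : nat).
Notation V := 'rV[R]_d.

Definition ev (i : 'I_d) : V := delta_mx 0 i.
Definition pd (f : V -> R) (i : 'I_d) (x : V) : R := derive f x (ev i).
Definition grad (f : V -> R) (x : V) : V := \row_i pd f i x.
Definition divg (F : V -> V) (x : V) : R := \sum_(i < d) pd (fun y => F y 0 i) i x.
Definition divT (M : V -> 'M[R]_d) (x : V) : V :=
  \row_i \sum_(j < d) pd (fun y => M y i j) j x.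
Definition dotv (u v : V) : R := \sum_(i < d) u 0 i * v 0 i.
Definition sqnorm (u : V) : R := dotv u u.

Definition vel (rho : V -> R) (m : V -> V) (x : V) : V := (rho x)^-1 *: m x.
Definition pressure (gamma eps : R) (rho : V -> R) (m : V -> V) (E : V -> R)
  (x : V) : R :=
  (gamma - 1) * (E x - eps ^+ 2 / 2 * rho x * sqnorm (vel rho m x)).
Definition pinf (p : V -> R) : R := inf (range p).
Definition Pi (eps : R) (p : V -> R) (x : V) : R :=
  eps ^+ 2 * p x + (1 - eps ^+ 2) * pinf p.

Definition explicit_step (gamma eps dt : R)
  (rho0 : V -> R) (m0 : V -> V) (E0 : V -> R)
  (rhoh : V -> R) (mh : V -> V) (Eh : V -> R) : Prop :=
  let p0 := pressure gamma eps rho0 m0 E0 in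
  let u0 := vel rho0 m0 in
  forall x,
    [/\ rhoh x = rho0 x - dt * divg m0 x,
        mh x = m0 x - dt *: divT (fun y =>
                 \matrix_(i, j) (rho0 y * u0 y 0 i * u0 y 0 j) + p0 y *: 1%:M) x
      & Eh x = E0 x - dt * divg (fun y => (E0 y + Pi eps p0 y) *: u0 y) x].

Definition implicit_mass_momentum (gamma eps dt : R)
  (rhoh : V -> R) (mh : V -> V) (Eh : V -> R)
  (rho1 : V -> R) (m1 : V -> V) (E1 : V -> R) : Prop :=
  let p1 := pressure gamma eps rho1 m1 E1 in
  forall x,
    rho1 x = rhoh x /\
    m1 x = mh x - ((1 - eps ^+ 2) / eps ^+ 2 * dt) *: grad p1 x.

Definition implicit_energy (gamma eps dt : R)
  (rhoh : V -> R) (mh : V -> V) (Eh : V -> R)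
  (rho1 : V -> R) (m1 : V -> V) (E1 : V -> R) : Prop :=
  let p1 := pressure gamma eps rho1 m1 E1 in
  forall x,
    E1 x = Eh x - (1 - eps ^+ 2) * dt *
             divg (fun y => (p1 y - pinf p1) *: vel rho1 m1 y) x.

Definition pressure_equation (gamma eps dt : R)
  (rhoh : V -> R) (mh : V -> V) (Eh : V -> R)
  (rho1 : V -> R) (m1 : V -> V) (E1 : V -> R) : Prop :=
  let p1 := pressure gamma eps rho1 m1 E1 in
  let ph := pressure gamma eps rhoh mh Eh in
  forall x,
    - ((1 - eps ^+ 2) ^+ 2 / eps ^+ 2 * dt ^+ 2) *
        divg (fun y => ((p1 y - pinf p1) / rhoh y) *: grad p1 y) x
      + p1 x / (gamma - 1)
    = - ((1 - eps ^+ 2) ^+ 2 / (2 * eps ^+ 2)) * (dt ^+ 2 / rhoh x)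
          * sqnorm (grad p1 x)
      - (1 - eps ^+ 2) * dt * (p1 x - pinf p1) * divg (vel rhoh mh) x
      + ph x / (gamma - 1).

End EulerDefs.

(* Main.v *)
Require Import Defs.
From HB Require Import structures.
From mathcomp Require Import all_boot all_order all_algebra.
From mathcomp Require Import all_classical all_reals all_analysis.
From mathcomp Require Import ring lra.
Import Order.TTheory GRing.Theory Num.Theory.
Import numFieldNormedType.Exports.
Local Open Scope ring_scope.

Section H.
Variables (R : realType) (d : nat).
Local Notation V := 'rV[R]_d.

Lemma pdB (f g : V -> R) (i : 'I_d) x : derivable f x (@ev R d i) -> derivable g x (@ev R d i) ->
  pd (fun y => f y - g y) i x = pd f i x - pd g i x.
Proof. move=> hf hg; rewrite /pd; exact: deriveB. Qed.

Lemma pdM (f g : V -> R) (i : 'I_d) x : derivable f x (@ev R d i) -> derivable g x (@ev R d i) ->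
  pd (fun y => f y * g y) i x = f x * pd g i x + g x * pd f i x.
Proof. move=> hf hg; rewrite /pd; exact: deriveM. Qed.

Lemma pdMl (f : V -> R) k (i : 'I_d) x : derivable f x (@ev R d i) ->
  pd (fun y => k * f y) i x = k * pd f i x.
Proof. move=> hf; rewrite /pd; exact: deriveMl. Qed.

Lemma pdBc (f : V -> R) k (i : 'I_d) x : derivable f x (@ev R d i) ->
  pd (fun y => f y - k) i x = pd f i x.
Proof.
move=> hf; rewrite (@pdB f (fun _ => k) i x hf (derivable_cst _ _ _)).
by rewrite /pd (derive_cst k) subr0.
Qed.

Lemma dvB (f g : V -> R) x v : derivable f x v -> derivable g x v ->
  derivable (fun y => f y - g y) x v.
Proof. exact: derivableB. Qed.
Lemma dvM (f g : V -> R) x v : derivable f x v -> derivable g x v ->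
  derivable (fun y => f y * g y) x v.
Proof. exact: derivableM. Qed.
Lemma dvV (f : V -> R) x v : f x != 0 -> derivable f x v ->
  derivable (fun y => (f y)^-1) x v.
Proof. exact: derivableV. Qed.
Lemma dvc (k : R) x v : derivable (fun _ : V => k) x v.
Proof. exact: derivable_cst. Qed.
Lemma dvcomp (m : V -> V) x v i : differentiable m x ->
  derivable (fun y => m y 0 i) x v.
Proof. by move=> /(@diff_derivable _ _ _ m x v) /derivable_mxP; apply. Qed.

Lemma sq_expand (a b : V) k :
  sqnorm (a - k *: b) = sqnorm a - 2 * k * dotv b a + k ^+ 2 * sqnorm b.
Proof.
rewrite /sqnorm /dotv !mulr_sumr -sumrB -big_split /=.
by apply: eq_bigr => i _; rewrite !mxE; ring.
Qed.


Lemma alg (eps gamma dt r P Pinf D S N U2 K E1 Eh W : R) :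
 eps != 0 -> gamma - 1 != 0 -> r != 0 ->
 P = (gamma - 1) * (E1 - eps ^+ 2 / 2 * r * W) ->
 W = U2 - 2 * ((1 - eps ^+ 2) / eps ^+ 2 * dt / r) * S
     + ((1 - eps ^+ 2) / eps ^+ 2 * dt / r) ^+ 2 * N ->
 (E1 = Eh - (1 - eps ^+ 2) * dt *
        ((P - Pinf) * D + S - (1 - eps ^+ 2) / eps ^+ 2 * dt * K)) <->
 (- ((1 - eps ^+ 2) ^+ 2 / eps ^+ 2 * dt ^+ 2) * K + P / (gamma - 1)
    = - ((1 - eps ^+ 2) ^+ 2 / (2 * eps ^+ 2)) * (dt ^+ 2 / r) * N
      - (1 - eps ^+ 2) * dt * (P - Pinf) * D
      + (gamma - 1) * (Eh - eps ^+ 2 / 2 * r * U2) / (gamma - 1)).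
Proof.
move=> he hg hr HP HW.
set L := (X in X = _ <-> _).
set Re := (X in _ = X <-> _).
set Lp := (X in _ <-> X = _).
set Rp := (X in _ <-> _ = X).
have key : Lp - Rp = L - Re.
  rewrite /Lp /Rp /L /Re HP HW. field.
  by rewrite he hg hr.
split=> H; apply/eqP; rewrite -subr_eq0; [rewrite key | rewrite -key];
  by rewrite H subrr.
Qed.

End H.

Theorem lemma3p1 (R : realType) (d : nat) (eps gamma dt : R)
  (rho0 : 'rV[R]_d -> R) (m0 : 'rV[R]_d -> 'rV[R]_d) (E0 : 'rV[R]_d -> R)
  (rhoh : 'rV[R]_d -> R) (mh : 'rV[R]_d -> 'rV[R]_d) (Eh : 'rV[R]_d -> R)
  (rho1 : 'rV[R]_d -> R) (m1 : 'rV[R]_d -> 'rV[R]_d) (E1 : 'rV[R]_d -> R)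
  (heps0 : 0 < eps) (heps1 : eps <= 1) (hgamma : 1 < gamma) (hdt : 0 < dt)
  (hrhoh : forall x, 0 < rhoh x)
  (hrhoh_diff : forall x, differentiable rhoh x)
  (hmh_diff : forall x, differentiable mh x)
  (hp1_diff : forall x, differentiable (pressure gamma eps rho1 m1 E1) x)
  (hp1_diff2 : forall (i : 'I_d) x,
      differentiable (pd (pressure gamma eps rho1 m1 E1) i) x) :
  (explicit_step gamma eps dt rho0 m0 E0 rhoh mh Eh /\
   implicit_mass_momentum gamma eps dt rhoh mh Eh rho1 m1 E1 /\
   implicit_energy gamma eps dt rhoh mh Eh rho1 m1 E1)
  <->
  (explicit_step gamma eps dt rho0 m0 E0 rhoh mh Eh /\
   implicit_mass_momentum gamma eps dt rhoh mh Eh rho1 m1 E1 /\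
   pressure_equation gamma eps dt rhoh mh Eh rho1 m1 E1).
Proof.
pose p1 := pressure gamma eps rho1 m1 E1.
pose c := (1 - eps ^+ 2) / eps ^+ 2 * dt.
pose P := pinf p1.
have rn0 : forall y, rhoh y != 0 by move=> y; rewrite gt_eqF.
have dp1 : forall x v, derivable p1 x v by move=> x v; exact: diff_derivable.
have dpp1 : forall i x v, derivable (pd p1 i) x v
  by move=> i x v; exact: diff_derivable.
have du : forall i x v, derivable (fun y => vel rhoh mh y 0 i) x v.
  move=> i x v.
  rewrite (_ : (fun y => _) = fun y => (rhoh y)^-1 * mh y 0 i); last first.
    by apply: funext => y; rewrite /vel !mxE.
  apply: (@dvM _ _ (fun y => (rhoh y)^-1)); last exact: dvcomp.
  by apply: dvV => //; exact: diff_derivable.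
have key : forall x, (forall y, rho1 y = rhoh y /\
                        m1 y = mh y - c *: grad p1 y) ->
  (E1 x = Eh x - (1 - eps ^+ 2) * dt *
             divg (fun y => (p1 y - P) *: vel rho1 m1 y) x) <->
  (- ((1 - eps ^+ 2) ^+ 2 / eps ^+ 2 * dt ^+ 2) *
        divg (fun y => ((p1 y - P) / rhoh y) *: grad p1 y) x
      + p1 x / (gamma - 1)
    = - ((1 - eps ^+ 2) ^+ 2 / (2 * eps ^+ 2)) * (dt ^+ 2 / rhoh x)
          * sqnorm (grad p1 x)
      - (1 - eps ^+ 2) * dt * (p1 x - P) * divg (vel rhoh mh) x
      + pressure gamma eps rhoh mh Eh x / (gamma - 1)).
  move=> x Hm.
  have Hvel : vel rho1 m1 = fun y => vel rhoh mh y - (c / rhoh y) *: grad p1 y.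
    apply: funext => y; rewrite /vel (Hm y).1 (Hm y).2.
    by apply/rowP => j; rewrite !mxE; ring.
  have Hdiv : divg (fun y => (p1 y - P) *: vel rho1 m1 y) x =
     (p1 x - P) * divg (vel rhoh mh) x + dotv (grad p1 x) (vel rhoh mh x)
     - c * divg (fun y => ((p1 y - P) / rhoh y) *: grad p1 y) x.
    rewrite Hvel /divg /dotv !mulr_sumr -big_split -sumrB /=.
    apply: eq_bigr => i _.
    have F1 : (fun y => ((p1 y - P) *: (vel rhoh mh y - (c / rhoh y) *: grad p1 y)) 0 i)
      = fun y => (p1 y - P) * vel rhoh mh y 0 i - c * ((p1 y - P) * (rhoh y)^-1 * pd p1 i y).
      by apply: funext => y; rewrite !mxE; ring.
    have F2 : (fun y => (((p1 y - P) / rhoh y) *: grad p1 y) 0 i)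
      = fun y => (p1 y - P) * (rhoh y)^-1 * pd p1 i y.
      by apply: funext => y; rewrite !mxE.
    rewrite F1 F2.
    have dK : derivable (fun y => (p1 y - P) * (rhoh y)^-1 * pd p1 i y) x
                (@ev R d i).
      apply: (@dvM _ _ (fun y => (p1 y - P) * (rhoh y)^-1)); last exact: dpp1.
      apply: (@dvM _ _ (fun y => p1 y - P)).
        by apply: dvB => //; exact: dvc.
      by apply: dvV => //; exact: diff_derivable.
    have dpB : derivable (fun y => p1 y - P) x (@ev R d i).
      by apply: dvB => //; exact: dvc.
    rewrite (@pdB _ _ (fun y => (p1 y - P) * vel rhoh mh y 0 i)
       (fun y => c * ((p1 y - P) * (rhoh y)^-1 * pd p1 i y)) i x
       (@dvM _ _ _ _ _ _ dpB (du i x _))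
       (@dvM _ _ (fun _ => c) _ x _ (@dvc _ _ c x _) dK)).
    rewrite (@pdMl _ _ (fun y => (p1 y - P) * (rhoh y)^-1 * pd p1 i y) c i x dK).
    rewrite (@pdM _ _ (fun y => p1 y - P) (fun y => vel rhoh mh y 0 i) i x dpB (du i x _)).
    rewrite (@pdBc _ _ p1 P i x (dp1 _ _)).
    by rewrite [grad p1 x 0 i]mxE [X in _ + X - _ = _]mulrC.
  rewrite Hdiv.
  apply: (@alg _ eps gamma dt (rhoh x) (p1 x) P _ _ _ _ _ (E1 x) (Eh x)
            (sqnorm (vel rho1 m1 x))).
  - by rewrite gt_eqF.
  - by rewrite subr_eq0 gt_eqF.
  - exact: rn0.
  - by rewrite /p1 /pressure (Hm x).1.
  - by rewrite Hvel sq_expand.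
split=> [[He [Hm Hen]]|[He [Hm Hp]]]; (do 2 split=> //).
  move=> x; exact: (proj1 (key x Hm) (Hen x)).
move=> x; exact: (proj2 (key x Hm) (Hp x)).
Qed.
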